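(* For every $n \ge 1$, the $\mathbb{Z}$-discriminating complexity of $\mathbb{Z}^n$ asymptotically dominates a polynomial of degree $n-1$, i.e. $(R \mapsto R^{n-1}) \preceq C_{\mathbb{Z}^n}^{\mathbb{Z}}$.
   Context: A homomorphism $\phi: G \to H$ discriminates a finite set $S\subseteq G-\{1\}$ if $1\notin\phi(S)$. For finite generating sets $X$ of $G$, $Y$ of $H$, $|\phi|_X^Y := \max_{x\in X}|\phi(x)|_Y$, and $C_{G,X}^{H,Y}(R) := \min\{|\phi|_X^Y : \phi \text{ discriminates } B_R(G,X)-\{1\}\}$, with $B_R(G,X)$ the closed word-metric ball of radius $R$. For $f,g:\mathbb{N}\to\mathbb{N}$, $f\preceq g$ means there is $K$ with $f(R)\le Kg(KR)+K$ for all $R$; the $\preceq$-class of $C_{G,X}^{H,Y}$ is independent of $X,Y$ and denoted $C_G^H$. *)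

(* Defs.v *)
From HB Require Import structures.
From mathcomp Require Import all_boot all_order all_algebra.
From Stdlib Require Import ClassicalEpsilon.
Set Implicit Arguments. Unset Strict Implicit. Unset Printing Implicit Defensive.
Import Order.TTheory GRing.Theory Num.Theory.
Local Open Scope ring_scope.

(* Least natural number satisfying P (classical); 0 if none exists. *)
Definition natmin (P : nat -> Prop) : nat :=
  match excluded_middle_informative (exists c, P c) with
  | left h =>
      @ex_minn (fun c => if excluded_middle_informative (P c) then true else false)
        (let (c, hc) := h in
         ex_intro _ c (match excluded_middle_informative (P c) as b
                             return ((if b then true else false) = true) with
                       | left _ => erefl true
                       | right hn => False_ind _ (hn hc) end))
  | right _ => 0%N
  end.

Definition is_hom (U V : zmodType) (f : U -> V) : Prop :=
  forall x y, f (x + y) = f x + f y.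

Definition wlen_le (V : zmodType) (X : seq V) (g : V) (k : nat) : Prop :=
  exists s : seq V, (size s <= k)%N /\
    all (fun y => (y \in X) || (- y \in X)) s /\ g = \sum_(y <- s) y.

Definition in_ball (V : zmodType) (X : seq V) (R : nat) (g : V) : Prop :=
  wlen_le X g R.

Definition discriminates_ball (U V : zmodType) (X : seq U) (R : nat) (f : U -> V) : Prop :=
  forall g, in_ball X R g -> g != 0 -> f g != 0.

(* C_{G,X}^{H,Y}(R) = min over discriminating homs phi of max_{x in X} |phi x|_Y,
   i.e. the least c such that some discriminating hom phi has |phi x|_Y <= c
   for all x in X. *)
Definition disc_complexity (U V : zmodType) (X : seq U) (Y : seq V) (R : nat) : nat :=
  natmin (fun c => exists f : U -> V, is_hom f /\ discriminates_ball X R f /\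
                     forall x, x \in X -> wlen_le Y (f x) c).

Definition preceq (f g : nat -> nat) : Prop :=
  exists K : nat, forall R : nat, (f R <= K * g (K * R) + K)%N.

Definition std_gens (n : nat) : seq 'rV[int]_n :=
  [seq delta_mx 0 i | i <- enum 'I_n].

(* Main.v *)
Require Import Defs.
From mathcomp Require Import all_boot all_order all_algebra.
From mathcomp Require Import zify ring lra.
From Stdlib Require Import ClassicalEpsilon.
Set Implicit Arguments. Unset Strict Implicit. Unset Printing Implicit Defensive.
Import Order.TTheory GRing.Theory Num.Theory.
Local Open Scope ring_scope.

Lemma natmin_spec (P : nat -> Prop) : (exists c, P c) -> P (natmin P).
Proof.
move=> h; rewrite /natmin; case: excluded_middle_informative => [h'|//].
case: ex_minnP => m Hm _.
by move: Hm; case: excluded_middle_informative.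
Qed.

Section Hom.
Variables (U V : zmodType) (f : U -> V) (hf : is_hom f).
Lemma hom0 : f 0 = 0.
Proof. by apply/(@addrI _ (f 0)); rewrite -hf !addr0. Qed.
Lemma homN x : f (- x) = - f x.
Proof. by apply/(@addrI _ (f x)); rewrite -hf !subrr hom0. Qed.
Lemma homB x y : f (x - y) = f x - f y.
Proof. by rewrite hf homN. Qed.
Lemma hom_sum (s : seq U) : f (\sum_(y <- s) y) = \sum_(y <- s) f y.
Proof. elim: s => [|a s IH]; first by rewrite !big_nil hom0.
by rewrite !big_cons hf IH. Qed.
End Hom.

Lemma ball_bound (U : zmodType) (X : seq U) (f : U -> int) (c k : nat) g :
  is_hom f -> (forall x, x \in X -> `|f x| <= c%:Z) ->
  wlen_le X g k -> `|f g| <= (c * k)%:Z.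
Proof.
move=> hf hX [s [hs [hall ->]]]; rewrite hom_sum //.
apply: (@le_trans _ _ (c * size s)%:Z); last by rewrite lez_nat leq_mul2l hs orbT.
elim: s hs hall => [|a s IH] hs /=; first by rewrite big_nil.
case/andP => ha hall; rewrite big_cons mulnS PoszD.
apply: (le_trans (ler_normD _ _)); apply: lerD; last by apply: IH => //; apply: ltnW.
case/orP: ha => ha; first exact: hX.
by rewrite -normrN -homN //; apply: hX.
Qed.



Lemma wlen_add (V : zmodType) (X : seq V) a b k1 k2 :
  wlen_le X a k1 -> wlen_le X b k2 -> wlen_le X (a + b) (k1 + k2).
Proof.
move=> [s [hs [ha ->]]] [t [ht [hb ->]]]; exists (s ++ t); split.
  by rewrite size_cat leq_add.
by rewrite all_cat ha hb big_cat.
Qed.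

Lemma wlen_opp (V : zmodType) (X : seq V) a k :
  wlen_le X a k -> wlen_le X (- a) k.
Proof.
move=> [s [hs [ha ->]]]; exists (map -%R s); split; first by rewrite size_map.
split; last by rewrite big_map -sumrN.
rewrite all_map; apply/allP => y hy /=; rewrite opprK orbC.
exact: (allP ha).
Qed.

Lemma wlen_mono (V : zmodType) (X : seq V) a k k' :
  (k <= k')%N -> wlen_le X a k -> wlen_le X a k'.
Proof. move=> hk [s [hs hh]]; exists s; split => //; exact: leq_trans hs hk. Qed.

Lemma wlen0 (V : zmodType) (X : seq V) : wlen_le X 0 0.
Proof. by exists [::]; rewrite big_nil. Qed.

Lemma wlen_gen (V : zmodType) (X : seq V) x : x \in X -> wlen_le X x 1.
Proof. by move=> hx; exists [:: x]; rewrite /= hx big_seq1. Qed.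

Lemma wlen_muln (V : zmodType) (X : seq V) x m : x \in X -> wlen_le X (x *+ m) m.
Proof.
move=> hx; elim: m => [|m IH]; first exact: wlen0.
by rewrite mulrS -addn1 addnC; apply: wlen_add => //; apply: wlen_gen.
Qed.

Lemma wlen_int (z : int) : wlen_le [:: 1] z (absz z).
Proof.
case: z => k.
  by have := @wlen_muln _ [:: (1:int)] 1 k (mem_head _ _); rewrite natz.
rewrite NegzE; apply: wlen_opp.
by have := @wlen_muln _ [:: (1:int)] 1 k.+1 (mem_head _ _); rewrite natz.
Qed.

Lemma wlen_bigsum (V : zmodType) (X : seq V) n (F : 'I_n -> V) (k : 'I_n -> nat) :
  (forall i, wlen_le X (F i) (k i)) -> wlen_le X (\sum_i F i) (\sum_i k i)%N.
Proof.
move=> h; elim/big_rec2: _ => [|i y1 y2 _ IH]; first exact: wlen0.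
exact: wlen_add.
Qed.

Definition vec n R (v : {ffun 'I_n -> 'I_R.+1}) : 'rV[int]_n :=
  \row_j ((v j : nat)%:Z).

Lemma vec_ball n R (v : {ffun 'I_n -> 'I_R.+1}) :
  wlen_le (std_gens n) (vec v) (n * R).
Proof.
have -> : vec v = \sum_(i < n) delta_mx 0 i *+ v i.
  apply/matrixP => a j; rewrite summxE mxE (bigD1 j) //= big1 => [|i hij];
    rewrite -scaler_nat !mxE (ord1 a) /=.
    by rewrite eqxx mulr1 addr0 natz.
  by rewrite eq_sym (negbTE hij) mulr0.
apply: (@wlen_mono _ _ _ (\sum_(i < n) v i)%N).
  rewrite -[X in (_ <= X * _)%N]card_ord -sum_nat_const; apply: leq_sum => i _.
  by rewrite -ltnS.
apply: wlen_bigsum => i; apply: wlen_muln.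
by apply/mapP; exists i => //; rewrite mem_enum.
Qed.

Lemma vec_inj n R : injective (@vec n R).
Proof.
move=> v w /matrixP h; apply/ffunP => i; apply/val_inj.
by have := h 0 i; rewrite !mxE => -[].
Qed.



Lemma digits0 (r : nat) (B : int) : r%:Z < B -> forall n (a : nat -> int),
  (forall i, (i < n)%N -> `|a i| <= r%:Z) ->
  \sum_(i < n) a i * B ^+ i = 0 -> forall i, (i < n)%N -> a i = 0.
Proof.
move=> hB; elim=> [|n IH] a ha hs i hi //.
move: hs; rewrite big_ord_recl /= expr0 mulr1.
set S := \sum_(i < n) _.
have hS : S = B * \sum_(i < n) a i.+1 * B ^+ i.
  rewrite mulr_sumr; apply: eq_bigr => k _.
  by rewrite /= /bump /= add1n exprS; ring.
rewrite hS => h0.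
have hr : \sum_(i < n) a i.+1 * B ^+ i = 0.
  case: (eqVneq (\sum_(i < n) a i.+1 * B ^+ i) 0) => // hne; exfalso.
  have h1 : `|a 0%N| = `|B| * `|\sum_(i < n) a i.+1 * B ^+ i|.
    by rewrite -normrM; apply/eqP; rewrite -normrN eq_sym; apply/eqP; congr `|_|;
       apply/eqP; rewrite -addr_eq0 addrC h0.
  have h2 : 1 <= `|\sum_(i < n) a i.+1 * B ^+ i| by rewrite -gtz0_ge1 normr_gt0.
  have h3 := ha 0%N isT.
  have hB0 : 0 <= B by apply: (le_trans _ (ltW hB)).
  have hB1 : `|B| <= `|a 0%N| by rewrite h1; apply: ler_peMr.
  move: hB1; rewrite ger0_norm // => hh.
  by have := lt_le_trans (le_lt_trans h3 hB) hh; rewrite ltxx.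
case: i hi => [|i] hi.
  by move: h0; rewrite hr mulr0 addr0.
by apply: (IH (fun k => a k.+1)) => // k hk; apply: ha.
Qed.

Lemma coord_bound n (g : 'rV[int]_n) k i :
  wlen_le (std_gens n) g k -> `|g 0 i| <= k%:Z.
Proof.
move=> h; have := @ball_bound _ (std_gens n) (fun g => g 0 i) 1 k g.
rewrite mul1n; apply => //.
  by move=> x y; rewrite mxE.
move=> x /mapP [j _ ->]; rewrite mxE eqxx /=.
by case: (i == j).
Qed.

Definition fB n (B : int) (g : 'rV[int]_n) : int := \sum_(i < n) g 0 i * B ^+ i.

Lemma fB_hom n B : is_hom (@fB n B).
Proof.
move=> x y; rewrite /fB -big_split; apply: eq_bigr => i _; by rewrite !mxE mulrDl.
Qed.

Lemma disc_exists n r : exists c, exists f : 'rV[int]_n -> int, is_hom f /\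
  discriminates_ball (std_gens n) r f /\
  forall x, x \in std_gens n -> wlen_le [:: 1] (f x) c.
Proof.
set f := @fB n (r.+1)%:Z.
exists (\max_(y <- std_gens n) absz (f y))%N, f; split; first exact: fB_hom.
split.
  move=> g hg hg0; apply/eqP => hf.
  rewrite /f in hf; clear f.
  case: n g hg hg0 hf => [|n] g hg hg0 hf.
    by move/eqP: hg0; apply; apply/matrixP => a [j hj].
  have hall : forall i, (i < n.+1)%N -> g 0 (inord i) = 0.
    apply: (@digits0 r (r.+1)%:Z _ n.+1 (fun i => g 0 (inord i))).
    - by rewrite ltz_nat.
    - by move=> i _; apply: coord_bound.
    rewrite -[X in _ = X]hf /fB; apply: eq_bigr => i _; by rewrite inord_val.
  move/eqP: hg0; apply; apply/matrixP => a j; rewrite (ord1 a) mxE.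
  by have := hall j (ltn_ord j); rewrite inord_val.
move=> x hx; apply: (wlen_mono _ (wlen_int (f x))).
by apply: (@leq_bigmax_seq _ _ predT (fun y => absz (f y))).
Qed.



Lemma pow_succ_ge (R k : nat) : (R ^ k.+1 + 1 <= R.+1 ^ k.+1)%N.
Proof.
elim: k => [|k IH]; first by rewrite !expn1 addn1.
rewrite (expnS R) (expnS R.+1).
have h : (R * R ^ k.+1 + 1 <= R.+1 * (R ^ k.+1 + 1))%N by nia.
exact: leq_trans h (leq_mul (leqnn _) IH).
Qed.

Theorem mainTheorem9 (n : nat) (hn : (1 <= n)%N) :
  preceq (fun R => (R ^ (n - 1))%N)
         (disc_complexity (std_gens n) [:: (1%R : int)]).
Proof.
exists (2 * n)%N => R.
case: R => [|R].
  apply: (@leq_trans 1%N).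
    by case: (n - 1)%N => [|k] //; rewrite expnS mul0n.
  lia.
set c := disc_complexity _ _ _.
have [f [hf [hdisc hX]]] : exists f : 'rV[int]_n -> int, is_hom f /\
    discriminates_ball (std_gens n) (2 * n * R.+1) f /\
    forall x, x \in std_gens n -> wlen_le [:: 1] (f x) c.
  by rewrite /c; apply: (natmin_spec (disc_exists n _)).
have hX' : forall x, x \in std_gens n -> `|f x| <= c%:Z.
  move=> x hx; have := @ball_bound _ [:: (1 : int)] id 1 c (f x).
  rewrite mul1n; apply => //; last exact: hX.
  by move=> z; rewrite inE => /eqP ->.
set M := (c * (n * R.+1))%N.
have hv : forall v : {ffun 'I_n -> 'I_R.+2}, `|f (vec v)| <= M%:Z.
  move=> v; apply: (@ball_bound _ (std_gens n)) => //; exact: (@vec_ball n R.+1 v).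
pose F (v : {ffun 'I_n -> 'I_R.+2}) : 'I_(2 * M).+1 :=
  inord (absz (f (vec v) + M%:Z)).
have hF : forall v : {ffun 'I_n -> 'I_R.+2}, (absz (f (vec v) + M%:Z)%R < (2 * M).+1)%N.
  move=> v; have := hv v; lia.
have Finj : injective F.
  move=> v w /(congr1 val); rewrite /F /= !inordK ?hF // => h.
  have h2 : f (vec v) = f (vec w).
    have := hv v; have := hv w; lia.
  apply: vec_inj; apply/eqP; rewrite -subr_eq0; apply/negPn/negP => hne.
  suff : f (vec v - vec w) != 0 by rewrite homB // h2 subrr eqxx.
  apply: hdisc hne.
  have -> : (2 * n * R.+1 = n * R.+1 + n * R.+1)%N by lia.
  by apply: wlen_add; [|apply: wlen_opp]; apply: vec_ball.
have := leq_card F Finj; rewrite card_ffun !card_ord => hcard.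
have hge := pow_succ_ge R.+1 (n - 1).
have hn1 : (n - 1).+1 = n by lia.
rewrite hn1 in hge.
have hexp : (R.+1 ^ n = R.+1 * R.+1 ^ (n - 1))%N by rewrite -expnS hn1.
rewrite /M in hcard.
nia.
Qed.
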